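(* Let $G$ be a ribbon graph. Then (1) $P_{\langle\tau\delta\tau\rangle}(G,x)=P_{\langle\delta\rangle}(G^{\times},x)$; (2) $P_{\langle\delta,\tau\rangle}(G,x)=2^{e(G)}P_{\langle\delta\tau\rangle}(G,x)$.
   Context: A ribbon graph $G=(V(G),E(G))$ is a (orientable or non-orientable) surface with boundary, represented as the union of a set $V(G)$ of vertex discs and a set $E(G)$ of edge discs (ribbons) such that vertices and edges intersect in disjoint line segments, each such segment lies on the boundary of exactly one vertex and exactly one edge, and every edge contains exactly two such segments. $v(G)$, $e(G)$ denote the numbers of vertices and edges. For $A\subseteq E(G)$, the partial dual $G^{\delta(A)}$ is obtained by gluing a disc along each boundary component of the spanning ribbon subgraph $(V(G),A)$ (these discs become the vertex discs), removing the interiors of the original vertex discs, and keeping the edge ribbons. The partial Petrial $G^{\tau(A)}$ adds a half-twist to each edge in $A$; $G^{\times}=G^{\tau(E(G))}$ (Petrie dual, with $E(G^\times)=E(G)$). For a word $w=w_1\cdots w_n$ over $\{\delta,\tau\}$, $G^{w(A)}=(\cdots(G^{w_n(A)})^{w_{n-1}(A)}\cdots)^{w_1(A)}$ (rightmost letter applied first), $G^{1(A)}=G$, and $G^{\xi(A)\pi(B)}=(G^{\xi(A)})^{\pi(B)}$. Vertex polynomials (sums over ordered partitions of $E(G)$ into pairwise disjoint, possibly empty parts): $P_{\langle\delta\rangle}(G,x)=\sum_{A\subseteq E(G)}x^{v(G^{\delta(A)})}$; $P_{\langle\tau\delta\tau\rangle}(G,x)=\sum_{A\subseteq E(G)}x^{v(G^{\tau\delta\tau(A)})}$;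 $P_{\langle\delta\tau\rangle}(G,x)=\sum_{(A_1,A_2,A_3)}x^{v(G^{1(A_1)\tau\delta(A_2)\delta\tau(A_3)})}$; $P_{\langle\delta,\tau\rangle}(G,x)=\sum_{(A_1,\dots,A_6)}x^{v(G^{1(A_1)\delta(A_2)\tau(A_3)\tau\delta(A_4)\delta\tau(A_5)\tau\delta\tau(A_6)})}$. *)

(* Defs.v *)
(* Combinatorial (flag / "graph-encoded map") model of
   (possibly non-orientable) ribbon graphs. *)
From HB Require Import structures.
From mathcomp Require Import all_boot all_algebra.
Set Implicit Arguments.
Unset Strict Implicit.
Unset Printing Implicit Defensive.
Import GRing.Theory.
Local Open Scope ring_scope.

(* Flags = corners of edge ribbons: (edge, end, side).  Each edge ribbon is
   a rectangle with 4 corners; the labels are arbitrary names, the actual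
   structure is given by the involutions below. *)
Notation flag E := ((E * bool * bool)%type).

(* A ribbon graph with edge set E:
   - rg_iso : number of isolated vertices (vertex discs with no edge ends);
   - rg_s   : pairs the two corners of an edge lying on the same attaching
              segment (edge end glued to a vertex);
   - rg_t   : pairs the two corners of an edge joined by a side of the edge
              ribbon (a boundary arc of the edge);
   - rg_r   : pairs two corners joined by a boundary arc of a vertex disc
              not contained in any attaching segment.
   Vertex boundary circles = orbits of <rg_r, rg_s>. *)
Record ribbon_graph (E : finType) := RibbonGraph {
  rg_iso : nat;
  rg_r : flag E -> flag E;
  rg_s : flag E -> flag E;
  rg_t : flag E -> flag E }.

Definition fedge (E : finType) (x : flag E) : E := x.1.1.

Definition is_ribbon_graph (E : finType) (G : ribbon_graph E) : Prop :=
  [/\ forall x, rg_r G (rg_r G x) = x /\ rg_r G x != x,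
      forall x, rg_s G (rg_s G x) = x /\ rg_s G x != x,
      forall x, rg_t G (rg_t G x) = x /\ rg_t G x != x,
      forall x, fedge (rg_s G x) = fedge x /\ fedge (rg_t G x) = fedge x
    & forall x, rg_s G (rg_t G x) = rg_t G (rg_s G x) /\ rg_s G (rg_t G x) != x].

Definition vrel (E : finType) (G : ribbon_graph E) : rel (flag E) :=
  fun x y => (y == rg_r G x) || (y == rg_s G x).

Definition nverts (E : finType) (G : ribbon_graph E) : nat :=
  rg_iso G + n_comp (vrel G) predT.

Definition pdual (E : finType) (A : {set E}) (G : ribbon_graph E) :=
  RibbonGraph (rg_iso G) (rg_r G)
    (fun x => if fedge x \in A then rg_t G x else rg_s G x)
    (fun x => if fedge x \in A then rg_s G x else rg_t G x).

(* partial Petrial G^{tau(A)}: half-twist on each edge of A *)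
Definition ppetrial (E : finType) (A : {set E}) (G : ribbon_graph E) :=
  RibbonGraph (rg_iso G) (rg_r G) (rg_s G)
    (fun x => if fedge x \in A then rg_s G (rg_t G x) else rg_t G x).

Inductive rletter := Ldelta | Ltau.

Definition apply_letter (E : finType) (l : rletter) (A : {set E}) G :=
  match l with Ldelta => pdual A G | Ltau => ppetrial A G end.

(* G^{w(A)} with w = w_1 ... w_n : rightmost letter applied first *)
Definition apply_word (E : finType) (w : seq rletter) (A : {set E})
  (G : ribbon_graph E) : ribbon_graph E :=
  foldr (fun l H => apply_letter l A H) G w.

(* G^{xi_1(A_1) xi_2(A_2) ... } = ((G^{xi_1(A_1)})^{xi_2(A_2)})... *)
Definition apply_ops (E : finType) (l : seq (seq rletter * {set E}))
  (G : ribbon_graph E) : ribbon_graph E :=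
  foldl (fun H p => apply_word p.1 p.2 H) G l.

Definition petrie_dual (E : finType) (G : ribbon_graph E) :=
  ppetrial [set: E] G.

Definition part (E : finType) k (f : {ffun E -> 'I_k}) (i : 'I_k) : {set E} :=
  [set e | f e == i].

Definition w1 : seq rletter := [::].
Definition wd : seq rletter := [:: Ldelta].
Definition wt : seq rletter := [:: Ltau].
Definition wtd : seq rletter := [:: Ltau; Ldelta].
Definition wdt : seq rletter := [:: Ldelta; Ltau].
Definition wtdt : seq rletter := [:: Ltau; Ldelta; Ltau].

Definition P_delta (E : finType) (G : ribbon_graph E) : {poly int} :=
  \sum_(A : {set E}) 'X^(nverts (apply_word wd A G)).

Definition P_tdt (E : finType) (G : ribbon_graph E) : {poly int} :=
  \sum_(A : {set E}) 'X^(nverts (apply_word wtdt A G)).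

Definition P_dt (E : finType) (G : ribbon_graph E) : {poly int} :=
  \sum_(f : {ffun E -> 'I_3})
    'X^(nverts (apply_ops [:: (w1, part f (inord 0)); (wtd, part f (inord 1));
                             (wdt, part f (inord 2))] G)).

Definition P_d_t (E : finType) (G : ribbon_graph E) : {poly int} :=
  \sum_(f : {ffun E -> 'I_6})
    'X^(nverts (apply_ops [:: (w1, part f (inord 0)); (wd, part f (inord 1));
                             (wt, part f (inord 2)); (wtd, part f (inord 3));
                             (wdt, part f (inord 4)); (wtdt, part f (inord 5))] G)).

(* Main.v *)
Require Import Defs.
From mathcomp Require Import all_boot all_algebra.
Import GRing.Theory.
Local Open Scope ring_scope.
Set Implicit Arguments.
Unset Strict Implicit.

Section Aux.
Variable (E : finType) (G : ribbon_graph E).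

Definition st := ((bool * bool) * (bool * bool))%type.

Definition ev (k : bool * bool) (x : flag E) : flag E :=
  if k.1 then (if k.2 then rg_s G (rg_t G x) else rg_s G x)
  else (if k.2 then rg_t G x else x).

Definition kx (a b : bool * bool) := (addb a.1 b.1, addb a.2 b.2).

Hypothesis HG : is_ribbon_graph G.

Lemma fedge_ev k x : fedge (ev k x) = fedge x.
Proof.
case: HG => _ _ _ Hf _; rewrite /ev.
case: k => [[] []] /=; rewrite ?(Hf _).1 ?(Hf _).2 //.
Qed.

Lemma ev_comp a b x : ev a (ev b x) = ev (kx a b) x.
Proof.
case: HG => _ Hs Ht _ Hst.
have ss y : rg_s G (rg_s G y) = y by case: (Hs y).
have tt y : rg_t G (rg_t G y) = y by case: (Ht y).
have stc y : rg_s G (rg_t G y) = rg_t G (rg_s G y) by case: (Hst y).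
rewrite /ev /kx.
case: a => [[] []]; case: b => [[] []] /=;
  rewrite ?ss ?tt //; rewrite ?stc ?ss ?tt //; rewrite -?stc ?ss ?tt //;
  rewrite stc ?tt //.
Qed.

Definition repr (c : E -> st) (H : ribbon_graph E) :=
  [/\ rg_iso H = rg_iso G, rg_r H = rg_r G &
      forall x, rg_s H x = ev (c (fedge x)).1 x /\ rg_t H x = ev (c (fedge x)).2 x].

Definition tr_letter (l : rletter) (s : st) : st :=
  match l with Ldelta => (s.2, s.1) | Ltau => (s.1, kx s.1 s.2) end.

Definition step_letter l (A : {set E}) (c : E -> st) :=
  fun e => if e \in A then tr_letter l (c e) else c e.

Definition word_state w A c := foldr (fun l c => step_letter l A c) c w.

Definition ops_state (L : seq (seq rletter * {set E})) c :=
  foldl (fun c p => word_state p.1 p.2 c) c L.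

Lemma repr_letter l A c H : repr c H -> repr (step_letter l A c) (apply_letter l A H).
Proof.
case=> Hi Hr Hst; split => //; first by case: l.
  by case: l.
move=> x; rewrite /step_letter; case: l => /=; case: (fedge x \in A) => //.
  by case: (Hst x) => -> ->.
case: (Hst x) => -> ->; split => //.
by rewrite (Hst _).1 fedge_ev ev_comp.
Qed.

Lemma repr_word w A c H : repr c H -> repr (word_state w A c) (apply_word w A H).
Proof.
elim: w => [|l w IH] //= Hc.
by apply: repr_letter; apply: IH.
Qed.

Lemma repr_ops L c H : repr c H -> repr (ops_state L c) (apply_ops L H).
Proof.
elim: L c H => [|p L IH] c H //= Hc.
by apply: IH; apply: repr_word.
Qed.

Lemma nverts_repr c c' H H' : repr c H -> repr c' H' ->
  (forall e, (c e).1 = (c' e).1) -> nverts H = nverts H'.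
Proof.
case=> Hi Hr Hs; case=> Hi' Hr' Hs' Hc.
rewrite /nverts Hi Hi'; congr (_ + _)%N.
apply: eq_n_comp; apply: eq_connect => x y.
by rewrite /vrel Hr Hr' (Hs x).1 (Hs' x).1 Hc.
Qed.

Definition c0 : E -> st := fun _ => ((true, false), (false, true)).

Lemma repr0 : repr c0 G.
Proof. by split => // x. Qed.

End Aux.

Lemma part1 (E : finType) (G : ribbon_graph E) : is_ribbon_graph G ->
  P_tdt G = P_delta (petrie_dual G).
Proof.
move=> HG; apply: eq_bigr => A _; congr ('X^ _).
have R0 := repr0 G.
have R1 : repr G (step_letter Ltau [set: E] (@c0 E)) (petrie_dual G).
  exact: (repr_letter HG Ltau [set: E] R0).
apply: (nverts_repr (repr_word HG wtdt A R0) (repr_word HG wd A R1)) => e.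
rewrite /= /step_letter /= inE; by case: (e \in A).
Qed.

Lemma eq_inord n (i : 'I_n.+1) k : (k <= n)%N -> (i == inord k) = (val i == k).
Proof. by move=> Hk; rewrite -val_eqE /= inordK. Qed.

Definition gI (i : 'I_6) : 'I_3 := inord (nth 0%N [:: 0; 1; 0; 1; 2; 2]%N i).
Definition bI (i : 'I_6) : bool := nth false [:: false; false; true; true; false; true] i.
Definition enc (k : 'I_3) (b : bool) : 'I_6 :=
  inord (nth 0%N (if b then [:: 2; 3; 5] else [:: 0; 1; 4])%N k).

Definition word_pt w (b : bool) (s : st) := if b then foldr tr_letter s w else s.
Definition ops_pt (L : seq (seq rletter * bool)) s :=
  foldl (fun s p => word_pt p.1 p.2 s) s L.

Lemma word_state_pt (E : finType) w (A : {set E}) c e :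
  word_state w A c e = word_pt w (e \in A) (c e).
Proof.
elim: w => [|l w IH] /=; first by case: (e \in A).
rewrite /step_letter IH /word_pt; by case: (e \in A).
Qed.

Lemma ops_state_pt (E : finType) L c (e : E) :
  ops_state L c e = ops_pt [seq (p.1, e \in p.2) | p : seq rletter * {set E} <- L] (c e).
Proof.
elim: L c => [|p L IH] c //=.
by rewrite IH word_state_pt.
Qed.

Lemma N63 (E : finType) (G : ribbon_graph E) (f : {ffun E -> 'I_6}) :
  is_ribbon_graph G ->
  nverts (apply_ops [:: (w1, part f (inord 0)); (wd, part f (inord 1));
                             (wt, part f (inord 2)); (wtd, part f (inord 3));
                             (wdt, part f (inord 4)); (wtdt, part f (inord 5))] G)
  = nverts (apply_ops [:: (w1, part [ffun e => gI (f e)] (inord 0));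
           (wtd, part [ffun e => gI (f e)] (inord 1));
           (wdt, part [ffun e => gI (f e)] (inord 2))] G).
Proof.
move=> HG.
apply: (nverts_repr (repr_ops HG _ (repr0 G)) (repr_ops HG _ (repr0 G))) => e.
rewrite !ops_state_pt !map_cons /part !inE !ffunE !eq_inord //.
rewrite /gI; case: (f e) => m Hm /=.
do 6 (case: m Hm => [|m] Hm; first by rewrite /= ?inordK).
by [].
Qed.

Lemma gI_enc k b : gI (enc k b) = k.
Proof.
apply: val_inj; rewrite /gI /enc; case: k => m Hm /=.
do 3 (case: m Hm => [|m] Hm; first by case: b; rewrite /= !inordK).
by [].
Qed.

Lemma bI_enc k b : bI (enc k b) = b.
Proof.
rewrite /bI /enc; case: k => m Hm /=.
do 3 (case: m Hm => [|m] Hm; first by case: b; rewrite /= !inordK).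
by [].
Qed.

Lemma enc_gb i : enc (gI i) (bI i) = i.
Proof.
apply: val_inj; rewrite /gI /bI /enc; case: i => m Hm /=.
do 6 (case: m Hm => [|m] Hm; first by rewrite /= !inordK).
by [].
Qed.

Lemma part2 (E : finType) (G : ribbon_graph E) : is_ribbon_graph G ->
  P_d_t G = (2 ^ #|E|)%N%:R * P_dt G.
Proof.
move=> HG; rewrite /P_d_t /P_dt.
under eq_bigr => f _ do rewrite (N63 f HG).
pose F3 := fun f3 : {ffun E -> 'I_3} =>
  'X^(nverts (apply_ops [:: (w1, part f3 (inord 0)); (wtd, part f3 (inord 1));
                             (wdt, part f3 (inord 2))] G)) : {poly int}.
change (\sum_(f : {ffun E -> 'I_6}) F3 [ffun e => gI (f e)] = (2 ^ #|E|)%N%:R * \sum_(f3 : {ffun E -> 'I_3}) F3 f3).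
rewrite (reindex (fun p : {ffun E -> 'I_3} * {ffun E -> bool} =>
                    [ffun e => enc (p.1 e) (p.2 e)])) /=; last first.
  apply: onW_bij.
  exists (fun f6 : {ffun E -> 'I_6} => ([ffun e => gI (f6 e)], [ffun e => bI (f6 e)])).
    by case=> a b /=; congr (_, _); apply/ffunP => e; rewrite !ffunE ?gI_enc ?bI_enc.
  by move=> f6; apply/ffunP => e; rewrite !ffunE enc_gb.
transitivity (\sum_(p : {ffun E -> 'I_3} * {ffun E -> bool}) F3 p.1).
  by apply: eq_bigr => p _; congr F3; apply/ffunP => e; rewrite !ffunE gI_enc.
rewrite -(pair_bigA _ (fun (a : {ffun E -> 'I_3}) (b : {ffun E -> bool}) => F3 a)) /=.
rewrite mulr_sumr; apply: eq_bigr => a _.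
rewrite sumr_const card_ffun card_bool.
by rewrite mulr_natl.
Qed.

Theorem mainTheorem3 (E : finType) (G : ribbon_graph E) :
  is_ribbon_graph G ->
  P_tdt G = P_delta (petrie_dual G) /\
  P_d_t G = (2 ^ #|E|)%N%:R * P_dt G.
Proof. by move=> HG; split; [exact: part1 | exact: part2]. Qed.
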